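(* Let $(G,* )$ be a Tychonoff $\aleph_0$-bounded topological group. Then every Rothberger bounded subset of $G$ is zero-dimensional.
   Context: A topological group $(G,* )$ is $\aleph_0$-bounded if for every open neighborhood $U$ of the identity there is a countable $C\subseteq G$ with $C*U=G$. A subset $X$ of $G$ is Rothberger bounded if for every sequence $(U_n:n<\omega)$ of open neighborhoods of the identity there are $g_n\in G$ with $X\subseteq\bigcup_n g_n*U_n$. *)

(* Defs.v *)
From HB Require Import structures.
From mathcomp Require Import all_boot all_order all_algebra.
From mathcomp Require Import all_classical all_reals all_analysis.
From mathcomp Require Import Rstruct Rstruct_topology.
From Stdlib Require Import Reals.

Set Implicit Arguments.
Unset Strict Implicit.
Unset Printing Implicit Defensive.

Local Open Scope classical_set_scope.

Definition topological_group (T : topologicalType)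
  (mul : T -> T -> T) (inv : T -> T) (e : T) : Prop :=
  [/\ (forall x y z, mul x (mul y z) = mul (mul x y) z),
      (forall x, mul e x = x /\ mul x e = x),
      (forall x, mul (inv x) x = e /\ mul x (inv x) = e),
      continuous (fun p : T * T => mul p.1 p.2) &
      continuous inv].

Definition tychonoff_space (T : topologicalType) : Prop :=
  accessible_space T /\
  forall (a : T) (B : set T), closed B -> ~ B a ->
    exists f : T -> R, [/\ continuous f, f a = 0%R &
                          forall b, B b -> f b = 1%R].

Definition ltranslate (T : Type) (mul : T -> T -> T) (g : T) (U : set T) :
  set T := [set mul g u | u in U].

Definition aleph0_bounded (T : topologicalType) (mul : T -> T -> T) (e : T)
  : Prop :=
  forall U : set T, open U -> U e ->
    exists C : set T, countable C /\
      [set mul c u | c in C & u in U] = [set: T].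

Definition rothberger_bounded (T : topologicalType) (mul : T -> T -> T) (e : T)
  (X : set T) : Prop :=
  forall U : nat -> set T, (forall n, open (U n) /\ U n e) ->
    exists g : nat -> T, X `<=` \bigcup_n ltranslate mul (g n) (U n).

(* X is zero-dimensional (as a subspace): the subspace topology on X has a
   base of clopen sets, i.e. every point x of X and every open U of T with
   x in U, there is a relatively clopen W of X with x in W, W inside U. *)
Definition zero_dimensional_subset (T : topologicalType) (X : set T) : Prop :=
  forall (x : T) (U : set T), X x -> open U -> U x ->
    exists W : set T,
      [/\ W x, W `<=` X `&` U,
          (exists O : set T, open O /\ W = O `&` X) &
          (exists C : set T, closed C /\ W = C `&` X)].

(* Main.v *)
Require Import Defs.
From mathcomp Require Import all_boot all_order all_algebra.
From mathcomp Require Import all_classical all_reals all_analysis.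
Local Open Scope classical_set_scope.
Section Chain.
Variables (T : Type) (mul : T -> T -> T) (inv : T -> T) (e : T).
Hypothesis assoc : forall x y z, mul x (mul y z) = mul (mul x y) z.
Hypothesis unit : forall x, mul e x = x /\ mul x e = x.
Hypothesis invr : forall x, mul (inv x) x = e /\ mul x (inv x) = e.
Variable P : nat -> T -> Prop.

Fixpoint chainP (a : T) (s : seq (nat * T)) : Prop :=
  match s with [::] => True | (n, b) :: s' => P n a /\ P n b /\ chainP b s' end.
Definition endpt (a : T) (s : seq (nat * T)) := last a (map snd s).

Lemma chain_cat a s1 s2 :
  chainP a (s1 ++ s2) <-> chainP a s1 /\ chainP (endpt a s1) s2.
Proof.
elim: s1 a => [|[n b] s1 IH] a /=; first by split => // [[]].
rewrite IH /endpt /=; split; first by case=> [? [? [? ?]]].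
by case=> [[? [? ?]] ?].
Qed.

Lemma split_at (n : nat) (s : seq (nat * T)) : n \in map fst s -> exists s1 b s2, s = s1 ++ (n, b) :: s2.
Proof.
elim: s => [|[m b] s IH] //=; rewrite in_cons => /orP[/eqP ->|/IH].
  by exists [::], b, s.
by case=> s1 [c [s2 ->]]; exists ((m, b) :: s1), c, s2.
Qed.

Lemma cancel_mid p c q : mul (mul p c) (mul (inv c) q) = mul p q.
Proof.
by rewrite assoc -(assoc p c) (proj2 (invr c)) (proj2 (unit p)).
Qed.

Definition reach (x y : T) := exists s, chainP x s /\ uniq (map fst s) /\ endpt x s = y.

Lemma reach_ext x y n z : reach x y -> P n y -> P n z -> reach x z.
Proof.
case=> s [hc [hu <-]] hy hz.
case: (boolP (n \in map fst s)) => hn.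
  case: (@split_at _ _ hn) => s1 [b [s2 es]]; subst s.
  move: hc => /chain_cat [hc1 /= [hPc _]].
  exists (s1 ++ [:: (n, z)]); split; first by apply/chain_cat.
  split; last by rewrite /endpt map_cat last_cat.
  move: hu; rewrite !map_cat !cat_uniq /= => /and3P [-> /norP [hn1 _] _].
  by rewrite orbF hn1.
exists (s ++ [:: (n, z)]); split; first by apply/chain_cat.
split; last by rewrite /endpt map_cat last_cat.
by rewrite map_cat cat_uniq hu /= orbF hn.
Qed.

Lemma reach_X (X : T -> Prop) x y : (forall n c, P n c -> X c) -> X x -> reach x y -> X y.
Proof.
move=> HP Hx [s [hc [_ <-]]]; elim: s x Hx hc => [|[n b] s IH] x Hx //= [_ [hb hc]].
exact: (IH b (HP _ _ hb) hc).
Qed.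

Variable N : nat -> T -> Prop.
Hypothesis Hstep : forall n c b, P n c -> P n b -> N n.+1 (mul (inv c) b).
Hypothesis HN0 : forall n, N n e.
Hypothesis Hcube : forall n u v w, N n.+1 u -> N n.+1 v -> N n.+1 w ->
  N n (mul u (mul v w)).

Lemma Nmono n u : N n.+1 u -> N n u.
Proof.
move=> H; have := @Hcube n _ _ _ (HN0 n.+1) (HN0 n.+1) H.
by rewrite (proj1 (unit u)) (proj1 (unit u)).
Qed.

Lemma bound k : forall m a (s : seq (nat * T)), chainP a s -> uniq (map fst s) ->
  (forall i, i \in map fst s -> m <= i < m + k) ->
  N m (mul (inv a) (endpt a s)).
Proof.
elim: k => [|k IH] m a s hc hu hb.
  case: s hc hu hb => [|[n b] s] /= hc hu hb.
    by rewrite (proj1 (invr a)).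
  have := hb n; rewrite in_cons eqxx /= => /(_ isT).
  by rewrite addn0; case/andP => h1 h2; move: (leq_trans h2 h1); rewrite ltnn.
case: (boolP (m \in map fst s)) => hm.
  case: (@split_at _ _ hm) => s1 [b [s2  es]]; subst s.
  move: hc => /chain_cat [hc1 /= [hPc [hPb hc2]]].
  move: hu; rewrite map_cat cat_uniq /= => /and3P [hu1 /norP [hms1 _] /andP [hms2 hu2]].
  have b1 : forall i, i \in map fst s1 -> m.+1 <= i < m.+1 + k.
    move=> i hi; have := hb i; rewrite map_cat mem_cat hi => /(_ isT).
    case/andP => h1 h2; rewrite addSnnS h2 andbT ltn_neqAle h1 andbT.
    by apply/eqP => ei; subst i; rewrite hi in hms1.
  have b2 : forall i, i \in map fst s2 -> m.+1 <= i < m.+1 + k.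
    move=> i hi; have := hb i; rewrite map_cat mem_cat /= in_cons hi !orbT => /(_ isT).
    case/andP => h1 h2; rewrite addSnnS h2 andbT ltn_neqAle h1 andbT.
    by apply/eqP => ei; subst i; rewrite hi in hms2.
  have N1 := IH _ _ _ hc1 hu1 b1.
  have N3 := IH _ _ _ hc2 hu2 b2.
  have N2 := @Hstep _ _ _ hPc hPb.
  have := @Hcube _ _ _ _ N1 N2 N3.
  rewrite cancel_mid cancel_mid.
  by rewrite /endpt map_cat last_cat.
apply: Nmono; apply: IH => // i hi; have := hb i hi.
case/andP => h1 h2; rewrite addSnnS h2 andbT ltn_neqAle h1 andbT.
by apply/eqP => ei; subst i; rewrite hi in hm.
Qed.

End Chain.
Lemma lmul (T : topologicalType) (mul : T -> T -> T) g :
  continuous (fun p : T * T => mul p.1 p.2) -> continuous (mul g).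
Proof.
move=> H x.
have := @continuous_comp _ _ _ (fun y => (g, y)) (fun p : T * T => mul p.1 p.2) x.
apply => //=.
  by apply: cvg_pair; [exact: cvg_cst|exact: cvg_id].
exact: H.
Qed.

Lemma nbhs2 (T : topologicalType) (mul : T -> T -> T) (e : T) :
  continuous (fun p : T * T => mul p.1 p.2) -> mul e e = e ->
  forall O : set T, open O -> O e ->
  exists A : set T, [/\ open A, A e & forall u v, A u -> A v -> O (mul u v)].
Proof.
move=> Hm hee O oO Oe.
have : nbhs (e, e) ((fun p : T * T => mul p.1 p.2) @^-1` O).
  apply: (Hm (e, e)); rewrite /= hee; exact: open_nbhs_nbhs.
case=> [[A B] [/= nA nB] sub].
have : nbhs e (A `&` B) by apply: filterI.
rewrite nbhsE => -[C [oC Ce] CAB].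
exists C; split => // u v Cu Cv.
have := sub (u, v); apply; split; [exact: (CAB _ Cu).1 | exact: (CAB _ Cv).2].
Qed.

Lemma mem_sumn (i : nat) (l : seq nat) : i \in l -> i <= sumn l.
Proof.
elim: l => [|a l IH] //=; rewrite in_cons => /orP [/eqP ->|/IH h].
  exact: leq_addr.
exact: (leq_trans h (leq_addl _ _)).
Qed.

Arguments nbhs2 {T mul e}.
Arguments lmul {T mul} g.

Theorem proposition3 (T : topologicalType) (mul : T -> T -> T) (inv : T -> T)
  (e : T) :
  topological_group mul inv e -> tychonoff_space T -> aleph0_bounded mul e ->
  forall X : set T, rothberger_bounded mul e X -> zero_dimensional_subset X.
Proof.
case=> assoc unit invr Hm Hinv _ _ X HR x U Xx oU Ux.
have hee : mul e e = e by rewrite (proj1 (unit e)).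
have inve : inv e = e by rewrite -{2}(proj1 (invr e)) (proj2 (unit _)).
have cube : forall O : set T, exists A : set T, open O /\ O e ->
    [/\ open A, A e & forall u v w, A u -> A v -> A w -> O (mul u (mul v w))].
  move=> O; case: (pselect (open O /\ O e)); last by move=> h; exists O.
  case=> oO Oe; case: (nbhs2 Hm hee _ oO Oe) => A [oA Ae HA].
  case: (nbhs2 Hm hee _ oA Ae) => B [oB Be HB].
  exists B => _; split => // u v w Bu Bv Bw; apply: HA; last exact: HB.
  by rewrite -(proj2 (unit u)); apply: HB.
case: (choice cube) => f Hf.
pose O0 := mul x @^-1` U.
have oO0 : open O0 by exact: (proj1 (continuousP _) (lmul x Hm) _ oU).
have O0e : O0 e by rewrite /O0 /= (proj2 (unit x)).
pose N n := iter n f O0.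
have HN : forall n, open (N n) /\ N n e.
  elim=> [|n [oN Ne]] //=; by case: (Hf (N n) (conj oN Ne)).
have Hcube : forall n u v w, N n.+1 u -> N n.+1 v -> N n.+1 w -> N n (mul u (mul v w)).
  by move=> n; case: (Hf (N n) (HN n)) => _ _ H u v w; apply: H.
have stp : forall n, exists A : set T,
    [/\ open A, A e & forall u v, A u -> A v -> N n.+1 (mul (inv u) v)].
  move=> n; case: (HN n.+1) => oN Ne.
  case: (nbhs2 Hm hee _ oN Ne) => B [oB Be HB].
  exists (B `&` inv @^-1` B); split.
  - by apply: openI => //; exact: (proj1 (continuousP _) Hinv _ oB).
  - by split => //=; rewrite inve.
  by move=> u v [_ Bu] [Bv _]; apply: HB.
case: (choice stp) => Uf HUf.
case: (HR Uf) => [n|g cover].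
  by case: (HUf n).
pose P n c := X c /\ ltranslate mul (g n) (Uf n) c.
have invM : forall a b, inv (mul a b) = mul (inv b) (inv a).
  move=> a b.
  have h : mul (mul a b) (mul (inv b) (inv a)) = e.
    by rewrite assoc -(assoc a b) (proj2 (invr b)) (proj2 (unit a)) (proj2 (invr a)).
  rewrite -[RHS](proj1 (unit _)) -(proj1 (invr (mul a b))) -assoc h.
  by rewrite (proj2 (unit _)).
have Hstep : forall n c b, P n c -> P n b -> N n.+1 (mul (inv c) b).
  move=> n c b [_ [u Uu <-]] [_ [v Uv <-]].
  rewrite invM -assoc (assoc (inv (g n))) (proj1 (invr _)) (proj1 (unit _)).
  by case: (HUf n) => _ _; apply.
have ltE : forall a (A : set T), ltranslate mul a A = mul (inv a) @^-1` A.
  move=> a A; rewrite eqEsubset; split => z.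
    by case=> u Au <-; rewrite /= assoc (proj1 (invr a)) (proj1 (unit u)).
  move=> /= Az; exists (mul (inv a) z) => //.
  by rewrite assoc (proj2 (invr a)) (proj1 (unit z)).
have oP : forall n, open (ltranslate mul (g n) (Uf n)).
  move=> n; rewrite ltE; case: (HUf n) => oU' _ _.
  exact: (proj1 (continuousP _) (lmul (inv (g n)) Hm) _ oU').
pose W := reach T P x.
have WX : forall y, W y -> X y.
  by move=> y; apply: reach_X => // n c [].
have Wx : W x by exists [::].
have cov : forall y, X y -> exists n, P n y.
  by move=> y Xy; case: (cover y Xy) => n _ hn; exists n.
exists W; split => //.
- move=> y Wy; split; first exact: WX.
  case: Wy => s [hc [hu <-]].
  have := @bound T mul inv e assoc unit invr P N Hstep (fun n => (HN n).2) Hcube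
    (sumn (map fst s)).+1 0 x s hc hu.
  rewrite /N /= /O0 /= assoc (proj2 (invr x)) (proj1 (unit _)); apply.
  move=> i hi; rewrite add0n ltnS; exact: mem_sumn.
- exists (\bigcup_(n in [set n | exists y, W y /\ P n y]) ltranslate mul (g n) (Uf n)).
  split; first by apply: bigcup_open => n _; exact: oP.
  rewrite eqEsubset; split => y.
    move=> Wy; have Xy := WX _ Wy; split => //.
    case: (cov _ Xy) => n Pn; exists n; first by exists y.
    exact: Pn.2.
  case=> [[n [z [Wz Pz]] hy] Xy].
  exact: (@reach_ext T P x z n y Wz Pz (conj Xy hy)).
- exists (~` \bigcup_(n in [set n | exists y, ~ W y /\ P n y]) ltranslate mul (g n) (Uf n)).
  split.
    by apply: open_closedC; apply: bigcup_open => n _; exact: oP.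
  rewrite eqEsubset; split => y.
    move=> Wy; have Xy := WX _ Wy; split => //.
    case=> n [z [nWz Pz]] hy; apply: nWz.
    exact: (@reach_ext T P x y n z Wy (conj Xy hy) Pz).
  case=> nO Xy; apply: contrapT => nWy.
  case: (cov _ Xy) => n Pn; apply: nO; exists n; first by exists y.
  exact: Pn.2.
Qed.
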